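(* Let $\alpha\in(0,1)$ and let $j\ge2$ be an integer, with coefficients $c_s^{(\alpha)}$, $0\le s\le j$, as defined in the context. Then $$\frac{11}{16}\cdot\frac{1-\alpha}{(j+1)^\alpha}<c_j^{(\alpha)}<\frac{1-\alpha}{j^\alpha},$$ $$c_0^{(\alpha)}>c_2^{(\alpha)}>c_3^{(\alpha)}>\dots>c_{j-1}^{(\alpha)}>c_j^{(\alpha)}\quad(\text{i.e. } c_0^{(\alpha)}>c_2^{(\alpha)} \text{ and } c_s^{(\alpha)}>c_{s+1}^{(\alpha)} \text{ for } 2\le s\le j-1),$$ $$c_0^{(\alpha)}+3c_1^{(\alpha)}-4c_2^{(\alpha)}>0.$$
   Context: For $l\ge 0$: $a_l^{(\alpha)}=(l+1)^{1-\alpha}-l^{1-\alpha}$ and $b_l^{(\alpha)}=\frac{1}{2-\alpha}\left[(l+1)^{2-\alpha}-l^{2-\alpha}\right]-\frac12\left[(l+1)^{1-\alpha}+l^{1-\alpha}\right]$. The coefficients $c_s^{(\alpha)}$ depend on $j$: for $j=2$: $c_0^{(\alpha)}=a_0^{(\alpha)}+b_0^{(\alpha)}$, $c_1^{(\alpha)}=a_1^{(\alpha)}+b_1^{(\alpha)}+b_2^{(\alpha)}-b_0^{(\alpha)}$, $c_2^{(\alpha)}=a_2^{(\alpha)}-b_2^{(\alpha)}-b_1^{(\alpha)}$; for $j\ge3$: $c_0^{(\alpha)}=a_0^{(\alpha)}+b_0^{(\alpha)}$, $c_s^{(\alpha)}=a_s^{(\alpha)}+b_s^{(\alpha)}-b_{s-1}^{(\alpha)}$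 for $1\le s\le j-2$, $c_{j-1}^{(\alpha)}=a_{j-1}^{(\alpha)}+b_{j-1}^{(\alpha)}+b_j^{(\alpha)}-b_{j-2}^{(\alpha)}$, $c_j^{(\alpha)}=a_j^{(\alpha)}-b_j^{(\alpha)}-b_{j-1}^{(\alpha)}$. *)

(* Defs.v *)
(* R : realType, real powers via powR (0 `^ x = 0 for x <> 0). *)
From HB Require Import structures.
From mathcomp Require Import all_boot all_order all_algebra.
From mathcomp Require Import all_classical all_reals all_analysis.
Set Implicit Arguments. Unset Strict Implicit. Unset Printing Implicit Defensive.
Import Order.TTheory GRing.Theory Num.Theory.
Local Open Scope ring_scope.

Section Coefs.
Variable R : realType.

Definition acoef (alpha : R) (l : nat) : R :=
  powR (l.+1%:R) (1 - alpha) - powR (l%:R) (1 - alpha).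

Definition bcoef (alpha : R) (l : nat) : R :=
  (2 - alpha)^-1 * (powR (l.+1%:R) (2 - alpha) - powR (l%:R) (2 - alpha))
  - 2^-1 * (powR (l.+1%:R) (1 - alpha) + powR (l%:R) (1 - alpha)).

(* c_s for a given j >= 2 (0 <= s <= j); the j = 2 case of the paper coincides
   with this uniform definition (s = 1 = j-1 branch). Value 0 for s > j. *)
Definition ccoef (alpha : R) (j s : nat) : R :=
  if s == 0%N then acoef alpha 0 + bcoef alpha 0
  else if s == j then acoef alpha j - bcoef alpha j - bcoef alpha j.-1
  else if s == j.-1 then
    acoef alpha s + bcoef alpha s + bcoef alpha j - bcoef alpha s.-1
  else if (s < j)%N then acoef alpha s + bcoef alpha s - bcoef alpha s.-1
  else 0.
End Coefs.

(* Main.v *)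
Require Import Defs.
From HB Require Import structures.
From mathcomp Require Import all_boot all_order all_algebra.
From mathcomp Require Import all_classical all_reals all_analysis.
Import Order.TTheory GRing.Theory Num.Theory.
From mathcomp Require Import ring lra zify.
Import numFieldNormedType.Exports.
Local Open Scope classical_set_scope.
Local Open Scope ring_scope.

Section S.
Variable R : realType.
Implicit Types f g : R -> R.
Implicit Types x y z w c : R.

Lemma dD f g (df dg z : R) : is_derive z 1 f df -> is_derive z 1 g dg ->
  is_derive z 1 (fun y => f y + g y) (df + dg).
Proof. move=> H1 H2; exact: is_deriveD. Qed.
Lemma dB f g (df dg z : R) : is_derive z 1 f df -> is_derive z 1 g dg ->
  is_derive z 1 (fun y => f y - g y) (df - dg).
Proof. move=> H1 H2; exact: is_deriveB. Qed.
Lemma dM f g (df dg z : R) : is_derive z 1 f df -> is_derive z 1 g dg ->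
  is_derive z 1 (fun y => f y * g y) (f z * dg + g z * df).
Proof. move=> H1 H2; exact: is_deriveM. Qed.
Lemma dC (c z : R) : is_derive z 1 (fun _ => c) 0.
Proof. exact: is_derive_cst. Qed.
Lemma dI (z : R) : is_derive z 1 (fun y => y) 1.
Proof. exact: is_derive_id. Qed.
Lemma dE f (df df' z : R) : is_derive z 1 f df -> df = df' -> is_derive z 1 f df'.
Proof. by move=> H <-. Qed.
Arguments dD {f g df dg z}. Arguments dB {f g df dg z}. Arguments dM {f g df dg z}.
Arguments dE {f df df' z}.

Lemma M1 (f df : R -> R) (a b : R) : a <= b ->
  (forall z, a <= z <= b -> is_derive z 1 f (df z)) ->
  (forall z, a < z < b -> df z <= 0) -> f b <= f a.
Proof.
move=> ab hd hneg.
case: (ltgtP a b) ab => // [altb _|-> _]; last by [].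
have cont : {within `[a, b], continuous f}.
  apply: derivable_within_continuous => z; rewrite in_itv /= => hz.
  by case: (hd z hz).
have [c] : exists2 c, c \in `]a, b[ & f b - f a = df c * (b - a).
  apply: MVT altb _ cont => z; rewrite in_itv /= => /andP[h1 h2].
  by apply: hd; rewrite !ltW.
rewrite in_itv /= => /andP[h1 h2] E.
rewrite -subr_le0 E; apply: mulr_le0_ge0; first by apply: hneg; rewrite h1 h2.
by rewrite subr_ge0 ltW.
Qed.

Lemma M2 (f df : R -> R) (a b : R) : a <= b ->
  (forall z, a <= z <= b -> is_derive z 1 f (df z)) ->
  (forall z, a < z < b -> 0 <= df z) -> f a <= f b.
Proof.
move=> ab hd hpos.
have := @M1 (fun y => - f y) (fun y => - df y) a b ab.
rewrite lerN2; apply.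
  by move=> z hz; apply: is_deriveN; apply: hd.
by move=> z hz; rewrite oppr_le0; apply: hpos.
Qed.

Variable al : R.
Hypothesis al0 : 0 < al.
Hypothesis al1 : al < 1.
Ltac L := have ? := al0; have ? := al1; lra.

Definition P (y : R) := powR y (1 - al).
Definition Q (y : R) := (2 - al)^-1 * powR y (2 - al).
Definition dP (y : R) := (1 - al) * powR y (- al).
Definition phi (y : R) := powR y (-1 - al).
Definition Af (x : R) := P (x + 1) - P x.
Definition Bf (x : R) := Q (x + 1) - Q x - 2^-1 * (P (x + 1) + P x).

Lemma dP_ok y : 0 < y -> is_derive y 1 P (dP y).
Proof.
move=> y0; apply: dE (is_derive1_powR (1 - al) y0) _.
by rewrite /dP; congr (_ * powR _ _); ring.
Qed.

Lemma dQ_ok y : 0 < y -> is_derive y 1 Q (P y).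
Proof.
move=> y0; have H := dM (dC ((2 - al)^-1) y) (is_derive1_powR (2 - al) y0).
apply: dE H _.
have h1 : 0 < 2 - al by L.
have h2 : 2 - al != 0 by rewrite gt_eqF.
rewrite mulr0 addr0 mulrA mulVf //.
by rewrite mul1r /P; congr (powR _ _); ring.
Qed.

Lemma ddP_ok y : 0 < y -> is_derive y 1 dP (- (al * (1 - al)) * phi y).
Proof.
move=> y0; have H := dM (dC (1 - al) y) (is_derive1_powR (- al) y0).
apply: dE H _.
rewrite mulr0 addr0 /phi.
have -> : - al - 1 = -1 - al by ring.
ring.
Qed.

Arguments dP_ok {y}. Arguments dQ_ok {y}. Arguments ddP_ok {y}.
Lemma dphi_ok y : 0 < y -> is_derive y 1 phi ((-1 - al) * powR y (-1 - al - 1)).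
Proof. by move=> y0; apply: is_derive1_powR. Qed.

Lemma phi_gt0 y : 0 < y -> 0 < phi y.
Proof. by move=> y0; apply: powR_gt0. Qed.

Lemma phi_dec y z : 0 < y -> y <= z -> phi z <= phi y.
Proof.
move=> y0 yz; apply: (@M1 phi (fun w => (-1 - al) * powR w (-1 - al - 1))); first by [].
  move=> w /andP[h1 h2]; apply: dphi_ok; L.
move=> w _; apply: mulr_le0_ge0; first L.
exact: powR_ge0.
Qed.

Definition rT c y z := (P z - P y - (z - y) * dP y) + c * ((z - y) * (z - y)) / 2.
Definition r1T c y z := dP z - dP y + c * (z - y).

Lemma rT_d c y z : 0 < z -> is_derive z 1 (rT c y) (r1T c y z).
Proof.
move=> z0.
have H4 := dB (dI z) (dC y z).
have H := dD (dB (dB (dP_ok z0) (dC (P y) z)) (dM H4 (dC (dP y) z)))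
  (dM (dM (dC c z) (dM H4 H4)) (dC (2^-1) z)).
by apply: dE H _; rewrite /r1T /=; field.
Qed.

Lemma r1T_d c y z : 0 < z -> is_derive z 1 (r1T c y) (c - al * (1 - al) * phi z).
Proof.
move=> z0.
have H4 := dB (dI z) (dC y z).
have H := dD (dB (ddP_ok z0) (dC (dP y) z)) (dM (dC c z) H4).
apply: dE H _; rewrite /=; ring.
Qed.

Lemma taylorR y : 0 < y ->
  P (y + 1) <= P y + dP y - al * (1 - al) * phi (y + 1) / 2.
Proof.
move=> y0.
set c := al * (1 - al) * phi (y + 1).
have r1neg : forall z, y <= z <= y + 1 -> r1T c y z <= 0.
  move=> z /andP[h1 h2].
  have -> : 0 = r1T c y y by rewrite /r1T; ring.
  apply: (@M1 (r1T c y) (fun w => c - al * (1 - al) * phi w) y z); first by [].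
    move=> w /andP[h3 h4]; apply: r1T_d; L.
  move=> w /andP[h3 h4]; rewrite subr_le0 /c ler_pM2l; last first.
    by apply: mulr_gt0 => //; L.
  apply: phi_dec; L.
have : rT c y (y + 1) <= rT c y y.
  apply: (@M1 (rT c y) (r1T c y) y (y + 1)); first L.
    move=> w /andP[h3 h4]; apply: rT_d; L.
  move=> w /andP[h3 h4]; apply: r1neg; rewrite !ltW //.
rewrite /rT. have -> : y + 1 - y = 1 by ring.
move=> H; have : 0 <= -(P (y + 1) - P y - 1 * dP y + c * (1 * 1) / 2) by lra.
move=> H'; lra.
Qed.

Lemma taylorL y : 1 < y ->
  P (y - 1) <= P y - dP y - al * (1 - al) * phi y / 2.
Proof.
move=> y1.
set c := al * (1 - al) * phi y.
have r1pos : forall z, y - 1 <= z <= y -> 0 <= r1T c y z.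
  move=> z /andP[h1 h2].
  have -> : 0 = r1T c y y by rewrite /r1T; ring.
  apply: (@M1 (r1T c y) (fun w => c - al * (1 - al) * phi w) z y); first by [].
    move=> w /andP[h3 h4]; apply: r1T_d; L.
  move=> w /andP[h3 h4]; rewrite subr_le0 /c ler_pM2l; last first.
    by apply: mulr_gt0 => //; L.
  apply: phi_dec; L.
have : rT c y (y - 1) <= rT c y y.
  apply: (@M2 (rT c y) (r1T c y) (y - 1) y); first L.
    move=> w /andP[h3 h4]; apply: rT_d; L.
  move=> w /andP[h3 h4]; apply: r1pos; rewrite !ltW //.
rewrite /rT. have -> : y - 1 - y = -1 by ring.
move=> H; lra.
Qed.

Definition hB c x z := Q z - Q x - (z - x) * (P x + P z) / 2
  - c * ((z - x) * (z - x) * (z - x)) / 12.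
Definition hB1 c x z := (P z - P x) / 2 - (z - x) * dP z / 2
  - c * ((z - x) * (z - x)) / 4.

Lemma hB_d c x z : 0 < z -> is_derive z 1 (hB c x) (hB1 c x z).
Proof.
move=> z0.
have H4 := dB (dI z) (dC x z).
have H := dB (dB (dB (dQ_ok z0) (dC (Q x) z))
                 (dM (dM H4 (dD (dC (P x) z) (dP_ok z0))) (dC (2^-1) z)))
             (dM (dM (dC c z) (dM (dM H4 H4) H4)) (dC (12^-1) z)).
by apply: dE H _; rewrite /hB1 /=; field.
Qed.

Lemma hB1_d c x z : 0 < z ->
  is_derive z 1 (hB1 c x) ((z - x) * (al * (1 - al) * phi z - c) / 2).
Proof.
move=> z0.
have H4 := dB (dI z) (dC x z).
have H := dB (dB (dM (dB (dP_ok z0) (dC (P x) z)) (dC (2^-1) z))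
                 (dM (dM H4 (ddP_ok z0)) (dC (2^-1) z)))
             (dM (dM (dC c z) (dM H4 H4)) (dC (4^-1) z)).
by apply: dE H _; rewrite /=; field.
Qed.

Lemma Bupper x : 0 < x -> Bf x <= al * (1 - al) * phi x / 12.
Proof.
move=> x0.
set c := al * (1 - al) * phi x.
have h1neg : forall z, x <= z <= x + 1 -> hB1 c x z <= 0.
  move=> z /andP[h1 h2].
  have -> : 0 = hB1 c x x by rewrite /hB1; field.
  apply: (@M1 (hB1 c x) (fun w => (w - x) * (al * (1 - al) * phi w - c) / 2) x z); first by [].
    move=> w /andP[h3 h4]; apply: hB1_d; L.
  move=> w /andP[h3 h4]; rewrite pmulr_lle0 ?invr_gt0 ?ltr0n //.
  apply: mulr_ge0_le0; first L.
  rewrite subr_le0 /c ler_pM2l; last by apply: mulr_gt0 => //; L.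
  apply: phi_dec; L.
have : hB c x (x + 1) <= hB c x x.
  apply: (@M1 (hB c x) (hB1 c x) x (x + 1)); first L.
    move=> w /andP[h3 h4]; apply: hB_d; L.
  move=> w /andP[h3 h4]; apply: h1neg; rewrite !ltW //.
rewrite /hB /Bf. have -> : x + 1 - x = 1 by ring.
move=> H.
have E : Q (x + 1) - Q x - 2^-1 * (P (x + 1) + P x) =
  (Q (x + 1) - Q x - 1 * (P x + P (x + 1)) / 2 - c * (1 * 1 * 1) / 12) + c / 12
  by field.
rewrite E; have E0 : Q x - Q x - (x - x) * (P x + P x) / 2 - c * ((x - x) * (x - x) * (x - x)) / 12 = 0 by field.
rewrite E0 in H.
lra.
Qed.

Lemma Blower x : 0 < x -> al * (1 - al) * phi (x + 1) / 12 <= Bf x.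
Proof.
move=> x0.
set c := al * (1 - al) * phi (x + 1).
have h1pos : forall z, x <= z <= x + 1 -> 0 <= hB1 c x z.
  move=> z /andP[h1 h2].
  have -> : 0 = hB1 c x x by rewrite /hB1; field.
  apply: (@M2 (hB1 c x) (fun w => (w - x) * (al * (1 - al) * phi w - c) / 2) x z); first by [].
    move=> w /andP[h3 h4]; apply: hB1_d; L.
  move=> w /andP[h3 h4]; apply: mulr_ge0; last by rewrite invr_ge0 ler0n.
  apply: mulr_ge0; first L.
  rewrite subr_ge0 /c ler_pM2l; last by apply: mulr_gt0 => //; L.
  apply: phi_dec; L.
have : hB c x x <= hB c x (x + 1).
  apply: (@M2 (hB c x) (hB1 c x) x (x + 1)); first L.
    move=> w /andP[h3 h4]; apply: hB_d; L.
  move=> w /andP[h3 h4]; apply: h1pos; rewrite !ltW //.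
rewrite /hB /Bf. have -> : x + 1 - x = 1 by ring.
move=> H.
have E : Q (x + 1) - Q x - 2^-1 * (P (x + 1) + P x) =
  (Q (x + 1) - Q x - 1 * (P x + P (x + 1)) / 2 - c * (1 * 1 * 1) / 12) + c / 12
  by field.
rewrite E; have E0 : Q x - Q x - (x - x) * (P x + P x) / 2 - c * ((x - x) * (x - x) * (x - x)) / 12 = 0 by field.
rewrite E0 in H.
lra.
Qed.

Lemma dP_dec y z : 0 < y -> y <= z -> dP z <= dP y.
Proof.
move=> y0 yz; apply: (@M1 dP (fun w => - (al * (1 - al)) * phi w)); first by [].
  move=> w /andP[h1 h2]; apply: ddP_ok; L.
move=> w /andP[h1 h2]; rewrite mulNr oppr_le0; apply: mulr_ge0.
  apply: mulr_ge0; L.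
apply: ltW; apply: phi_gt0; L.
Qed.

Lemma dP_ge0 y : 0 <= dP y.
Proof. apply: mulr_ge0; [L | exact: powR_ge0]. Qed.

Lemma P_inc y z : 0 < y -> y <= z -> P y <= P z.
Proof.
move=> y0 yz; apply: (@M2 P dP); first by [].
  move=> w /andP[h1 h2]; apply: dP_ok; L.
by move=> w _; apply: dP_ge0.
Qed.

Lemma P2phi y : 0 < y -> y * y * phi y = P y.
Proof.
move=> y0; rewrite /phi /P.
have -> : 1 - al = 2%:R + (-1 - al) by rewrite -natr1; ring.
rewrite [in RHS]powRD; last by rewrite (gt_eqF y0) implybT.
by rewrite powR_mulrn ?ltW // expr2 mulrC.
Qed.

Lemma dPP y : 0 < y -> y * dP y = (1 - al) * P y.
Proof.
move=> y0; rewrite /dP /P.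
rewrite [in RHS]powRD; last by rewrite (gt_eqF y0) implybT.
rewrite powRr1 ?ltW //; ring.
Qed.

Lemma dPE y : dP y = (1 - al) / powR y al.
Proof. by rewrite /dP powRN. Qed.

Lemma P0 : P 0 = 0.
Proof. rewrite /P powR0 //; apply: lt0r_neq0; L. Qed.
Lemma Q0 : Q 0 = 0.
Proof. rewrite /Q powR0 ?mulr0 //; apply: lt0r_neq0; L. Qed.
Lemma P1 : P 1 = 1.
Proof. by rewrite /P powR1. Qed.
Lemma Q1 : Q 1 = (2 - al)^-1.
Proof. by rewrite /Q powR1 mulr1. Qed.
Lemma dP1 : dP 1 = 1 - al.
Proof. by rewrite /dP powR1 mulr1. Qed.
Lemma phi1 : phi 1 = 1.
Proof. by rewrite /phi powR1. Qed.

Lemma phi_le1 y : 1 <= y -> phi y <= 1.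
Proof. by move=> y1; rewrite -phi1; apply: phi_dec. Qed.

Lemma B_ge0 x : 0 < x -> 0 < Bf x.
Proof.
move=> x0; apply: lt_le_trans (@Blower x x0).
apply: divr_gt0; last by [].
apply: mulr_gt0; last by apply: phi_gt0; L.
apply: mulr_gt0; L.
Qed.

Lemma A_up x : 0 < x -> Af x <= dP x.
Proof.
move=> x0; have := @taylorR x x0; rewrite /Af.
have : 0 <= al * (1 - al) * phi (x + 1) / 2.
  apply: divr_ge0; last by [].
  apply: mulr_ge0; last by apply: ltW; apply: phi_gt0; L.
  apply: mulr_ge0; L.
move=> *; lra.
Qed.

Lemma A_lo x : 0 < x -> dP (x + 1) <= Af x.
Proof.
move=> x0; have := @taylorL (x + 1); rewrite /Af.
have -> : x + 1 - 1 = x by ring.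
have : 0 <= al * (1 - al) * phi (x + 1) / 2.
  apply: divr_ge0; last by [].
  apply: mulr_ge0; last by apply: ltW; apply: phi_gt0; L.
  apply: mulr_ge0; L.
move=> h1 h2; have := h2 ltac:(L); lra.
Qed.

Lemma poly_pos x : 2 <= x ->
  0 < 7 * ((x - 1) ^+ 2 * (x + 2) ^+ 2) + 5 * ((x - 1) ^+ 2 * (x + 1) ^+ 2)
      - (x + 2) ^+ 2 * (x + 1) ^+ 2.
Proof.
move=> x2; set w := x - 2.
have -> : x = w + 2 by rewrite /w; ring.
have w0 : 0 <= w by rewrite /w; lra.
have w2 : 0 <= w ^+ 2 by apply: sqr_ge0.
have w3 : 0 <= w ^+ 3 by apply: exprn_ge0.
have w4 : 0 <= w ^+ 4 by apply: exprn_ge0.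
have -> : 7 * ((w + 2 - 1) ^+ 2 * (w + 2 + 2) ^+ 2) + 5 * ((w + 2 - 1) ^+ 2 * (w + 2 + 1) ^+ 2)
      - (w + 2 + 2) ^+ 2 * (w + 2 + 1) ^+ 2 = 13 + 232 * w + 268 * w ^+ 2 + 96 * w ^+ 3 + 11 * w ^+ 4.
  by ring.
lra.
Qed.

Lemma phi_comb x A0 F C : 2 <= x -> 0 < F ->
  (x - 1) ^+ 2 * A0 <= (x + 1) ^+ 2 * F -> (x + 1) ^+ 2 * F <= (x + 2) ^+ 2 * C ->
  0 < 7 * F + 5 * C - A0.
Proof.
move=> x2 F0 h1 h2.
have m0 : 0 < (x - 1) ^+ 2 * (x + 2) ^+ 2.
  apply: mulr_gt0; apply: exprn_gt0; lra.
have hp := @poly_pos x x2.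
have h3 : 0 < F * (7 * ((x - 1) ^+ 2 * (x + 2) ^+ 2) + 5 * ((x - 1) ^+ 2 * (x + 1) ^+ 2)
      - (x + 2) ^+ 2 * (x + 1) ^+ 2) by apply: mulr_gt0.
have h1' : (x + 2) ^+ 2 * ((x - 1) ^+ 2 * A0) <= (x + 2) ^+ 2 * ((x + 1) ^+ 2 * F).
  by apply: ler_wpM2l => //; apply: sqr_ge0.
have h2' : (x - 1) ^+ 2 * ((x + 1) ^+ 2 * F) <= (x - 1) ^+ 2 * ((x + 2) ^+ 2 * C).
  by apply: ler_wpM2l => //; apply: sqr_ge0.
have : 0 < (x - 1) ^+ 2 * (x + 2) ^+ 2 * (7 * F + 5 * C - A0).
  have E : (x - 1) ^+ 2 * (x + 2) ^+ 2 * (7 * F + 5 * C - A0) =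
    F * (7 * ((x - 1) ^+ 2 * (x + 2) ^+ 2) + 5 * ((x - 1) ^+ 2 * (x + 1) ^+ 2)
      - (x + 2) ^+ 2 * (x + 1) ^+ 2)
    + 5 * ((x - 1) ^+ 2 * ((x + 2) ^+ 2 * C) - (x - 1) ^+ 2 * ((x + 1) ^+ 2 * F))
    + ((x + 2) ^+ 2 * ((x + 1) ^+ 2 * F) - (x + 2) ^+ 2 * ((x - 1) ^+ 2 * A0)) by ring.
  rewrite E; lra.
by rewrite pmulr_rgt0.
Qed.

Lemma mono_core x : 2 <= x ->
  0 < Af x - Af (x + 1) + 2 * Bf x - Bf (x - 1) - Bf (x + 1) - Bf (x + 2).
Proof.
move=> x2.
have T1 := @taylorR (x + 1) ltac:(L).
have T2 := @taylorL (x + 1) ltac:(L).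
have E1 : x + 1 + 1 = x + 2 by ring.
have E2 : x + 1 - 1 = x by ring.
rewrite E1 in T1; rewrite E2 in T2.
have B1 := @Blower x ltac:(L).
have B2 := @Bupper (x - 1) ltac:(L).
have B3 := @Bupper (x + 1) ltac:(L).
have B4 := @Bupper (x + 2) ltac:(L).
have Fp := @phi_gt0 (x + 1) ltac:(L).
have hA : (x - 1) ^+ 2 * phi (x - 1) <= (x + 1) ^+ 2 * phi (x + 1).
  rewrite !expr2 !P2phi; try L. apply: P_inc; L.
have hC : (x + 1) ^+ 2 * phi (x + 1) <= (x + 2) ^+ 2 * phi (x + 2).
  rewrite !expr2 !P2phi; try L. apply: P_inc; L.
have K := @phi_comb x _ _ _ x2 Fp hA hC.
have k0 : 0 < al * (1 - al) by apply: mulr_gt0; L.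
have K' := mulr_gt0 k0 K.
rewrite /Af E1.
lra.
Qed.

Lemma claim1_real x : 2 <= x ->
  (11 / 16) * ((1 - al) / powR (x + 1) al) < Af x - Bf x - Bf (x - 1).
Proof.
move=> x2.
have hA := @A_lo x ltac:(L).
have hB1 := @Bupper x ltac:(L).
have hB2 := @Bupper (x - 1) ltac:(L).
rewrite -dPE.
suff S : al * (1 - al) * (phi x + phi (x - 1)) / 12 < 5 / 16 * dP (x + 1).
  lra.
set D := dP (x + 1).
set a := phi x; set b := phi (x - 1).
set Pp := P (x + 1).
have a0 : 0 <= a by apply: ltW; apply: phi_gt0; L.
have b0 : 0 <= b by apply: ltW; apply: phi_gt0; L.
have hD : (x + 1) * D = (1 - al) * Pp by apply: dPP; L.
have ha : x * x * a <= Pp by rewrite /a P2phi; [apply: P_inc; L | L].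
have hb : (x - 1) * (x - 1) * b <= Pp by rewrite /b P2phi; [apply: P_inc; L | L].
have ha' : (x + 1) * a <= 3 / 4 * Pp.
  have : 0 <= (3 / 4 * (x * x) - (x + 1)) * a.
    apply: mulr_ge0 => //; nra.
  move=> h; nra.
have hb' : (x + 1) * b <= 3 * Pp.
  have : 0 <= (3 * ((x - 1) * (x - 1)) - (x + 1)) * b.
    apply: mulr_ge0 => //; nra.
  move=> h; nra.
have Pp0 : 0 < Pp by apply: powR_gt0; L.
have k0 : 0 < al * (1 - al) by apply: mulr_gt0; L.
have x1 : 0 < x + 1 by L.
rewrite -(ltr_pM2l x1).
have -> : (x + 1) * (al * (1 - al) * (a + b) / 12) =
  al * (1 - al) * ((x + 1) * a + (x + 1) * b) / 12 by ring.
have -> : (x + 1) * (5 / 16 * D) = 5 / 16 * ((x + 1) * D) by ring.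
rewrite hD.
have h1 : al * (1 - al) * ((x + 1) * a + (x + 1) * b) <= al * (1 - al) * (15 / 4 * Pp).
  rewrite ler_pM2l //; lra.
have h2 : 0 < (1 - al) * Pp * (1 - al) by apply: mulr_gt0; [apply: mulr_gt0 => //; L | L].
have h3 : 0 < (1 - al) * Pp by apply: mulr_gt0 => //; L.
have h4 : al * ((1 - al) * Pp) < 1 * ((1 - al) * Pp).
  by rewrite ltr_pM2r //; L.
nra.
Qed.

Lemma claim2_real x : 2 <= x ->
  Af x - Bf x - Bf (x - 1) < (1 - al) / powR x al.
Proof.
move=> x2.
have := @A_up x ltac:(L).
have := @B_ge0 x ltac:(L).
have := @B_ge0 (x - 1) ltac:(L).
rewrite dPE; lra.
Qed.

Lemma natE n : (n.+1)%:R = n%:R + 1 :> R.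
Proof. by rewrite -natr1. Qed.

Lemma acoefE l : acoef al l = Af l%:R.
Proof. by rewrite /acoef /Af /P natE. Qed.

Lemma bcoefE l : bcoef al l = Bf l%:R.
Proof. rewrite /bcoef /Bf /Q /P natE; ring. Qed.

Lemma Af0 : Af 0 = 1.
Proof. by rewrite /Af add0r P1 P0 subr0. Qed.

Lemma Bf0 : Bf 0 = (2 - al)^-1 - 2^-1.
Proof. rewrite /Bf add0r Q1 Q0 P1 P0; ring. Qed.

Lemma Iinv : (2 - al)^-1 * (2 - al) = 1.
Proof. apply: mulVf; apply: lt0r_neq0; L. Qed.

Lemma claim3_real c2 :
  c2 <= Af 2 + Bf 2 + Bf 3 -> Af 0 + Bf 0 > c2.
Proof.
move=> h.
rewrite Af0 Bf0.
have h1 := @A_up 2 ltac:(L).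
have h2 := @dP_dec 1 2 ltac:(L) ltac:(L).
rewrite dP1 in h2.
have h3 := @Bupper 2 ltac:(L).
have h4 := @Bupper 3 ltac:(L).
have p2 := @phi_le1 2 ltac:(L).
have p3 := @phi_le1 3 ltac:(L).
have k0 : 0 < al * (1 - al) by apply: mulr_gt0; L.
have q2 : al * (1 - al) * phi 2 <= al * (1 - al) by apply: ler_piMr; [apply: ltW | apply: phi_le1; L].
have q3 : al * (1 - al) * phi 3 <= al * (1 - al) by apply: ler_piMr; [apply: ltW | apply: phi_le1; L].
have I := Iinv.
have Ih : 2^-1 <= (2 - al)^-1.
  have : 0 < 2 - al by L.
  move=> h0; nra.
have a2 : 0 <= al * al by nra.
lra.
Qed.

Lemma claim5_real c0 c1 c2 :
  c0 = Af 0 + Bf 0 ->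
  c0 + 3 * c1 - 4 * c2 >= 1 - 2 * Bf 0 + 3 * Af 1 - 4 * Af 2 - 4 * Bf 2 - 4 * Bf 3 ->
  c0 + 3 * c1 - 4 * c2 > 0.
Proof.
move=> _ h; apply: lt_le_trans h.
rewrite Bf0.
have h1 := @A_lo 1 ltac:(L).
have E : (1 + 1 : R) = 2 by [].
rewrite E in h1.
have h2 := @A_up 2 ltac:(L).
have h3 := @A_up 1 ltac:(L); rewrite dP1 in h3.
have hP : Af 1 = P 2 - 1 by rewrite /Af E P1.
have hd : 2 * dP 2 = (1 - al) * P 2 by apply: dPP; L.
have h5 := @Bupper 2 ltac:(L).
have h6 := @Bupper 3 ltac:(L).
have k0 : 0 < al * (1 - al) by apply: mulr_gt0; L.
have q2 : al * (1 - al) * phi 2 <= al * (1 - al) by apply: ler_piMr; [apply: ltW | apply: phi_le1; L].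
have q3 : al * (1 - al) * phi 3 <= al * (1 - al) by apply: ler_piMr; [apply: ltW | apply: phi_le1; L].
have I := Iinv.
have hd' : dP 2 <= (1 - al) * (2 - al) / 2.
  have : P 2 <= 2 - al by lra.
  move=> hP2; have : (1 - al) * P 2 <= (1 - al) * (2 - al) by rewrite ler_pM2l //; L.
  move=> *; lra.
set R0 := (1 - al) * (2 - al) / 2 + 2 * (al * (1 - al)) / 3.
have hpoly : 1 < (1 - R0 / 2) * (2 - al).
  rewrite /R0.
  have : 0 < (1 - al) * al * (4 + al) by apply: mulr_gt0; [apply: mulr_gt0; L | L].
  move=> h0; nra.
have hI : (2 - al)^-1 < 1 - R0 / 2.
  have : 0 < 2 - al by L.
  move=> h0; nra.
rewrite /R0 in hI.
lra.
Qed.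

Lemma Bpos n : (1 <= n)%N -> 0 < bcoef al n.
Proof. by move=> n1; rewrite bcoefE; apply: B_ge0; rewrite ltr0n. Qed.

Lemma main j : (2 <= j)%N ->
  [/\ (11 / 16) * ((1 - al) / powR (j.+1%:R) al) < ccoef al j j,
      ccoef al j j < (1 - al) / powR (j%:R) al,
      ccoef al j 0 > ccoef al j 2,
      (forall s : nat, (2 <= s)%N -> (s <= j.-1)%N ->
         ccoef al j s > ccoef al j s.+1)
    & ccoef al j 0 + 3 * ccoef al j 1 - 4 * ccoef al j 2 > 0].
Proof.
case: j => [|[|k]] // _.
have cjj : ccoef al k.+2 k.+2 = acoef al k.+2 - bcoef al k.+2 - bcoef al k.+1.
  by rewrite /ccoef /= eqxx.
have c0 : ccoef al k.+2 0 = Af 0 + Bf 0.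
  by rewrite /ccoef /= acoefE bcoefE.
have e1 : (k.+1)%:R = k%:R + 1 :> R by rewrite natE.
have e2 : (k.+2)%:R = k%:R + 1 + 1 :> R by rewrite !natE.
have e3 : (k.+3)%:R = k%:R + 1 + 1 + 1 :> R by rewrite !natE.
have b1 := @Bpos 1 isT.
have b2 := @Bpos 2 isT.
have b3 := @Bpos 3 isT.
split.
- rewrite cjj acoefE !bcoefE e1 e2 ?e3.
  have := @claim1_real (k%:R + 1 + 1) ltac:(have := ler0n R k; L).
  by have -> : (k%:R : R) + 1 + 1 - 1 = k%:R + 1 by ring.
- rewrite cjj acoefE !bcoefE e1 e2 ?e3.
  have := @claim2_real (k%:R + 1 + 1) ltac:(have := ler0n R k; L).
  by have -> : (k%:R : R) + 1 + 1 - 1 = k%:R + 1 by ring.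
- rewrite c0; apply: claim3_real.
  rewrite -!acoefE -!bcoefE.
  clear e1 e2 e3; case: k {cjj c0} => [|[|k]]; rewrite /ccoef /=; lra.
- move=> s; case: s => [|[|m]] // _ /= hm.
  have F : 0 < acoef al m.+2 - acoef al m.+3 + 2 * bcoef al m.+2 - bcoef al m.+1
      - bcoef al m.+3 - bcoef al m.+4.
    rewrite !acoefE !bcoefE.
    have f1 : (m.+1)%:R = m%:R + 1 :> R by rewrite natE.
    have f2 : (m.+2)%:R = m%:R + 1 + 1 :> R by rewrite !natE.
    have f3 : (m.+3)%:R = m%:R + 1 + 1 + 1 :> R by rewrite !natE.
    have f4 : (m.+4)%:R = m%:R + 1 + 1 + 1 + 1 :> R by rewrite !natE.
    rewrite f1 f2 f3 f4.
    have := @mono_core (m%:R + 1 + 1) ltac:(have := ler0n R m; L).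
    have -> : (m%:R : R) + 1 + 1 - 1 = m%:R + 1 by ring.
    by have -> : (m%:R : R) + 1 + 1 + 2 = m%:R + 1 + 1 + 1 + 1 by ring.
  have p1 := @Bpos m.+1 isT.
  have p2 := @Bpos m.+2 isT.
  have p3 := @Bpos m.+3 isT.
  have p4 := @Bpos m.+4 isT.
  clear e1 e2 e3 cjj c0.
  move: F p1 p2 p3 p4.
  rewrite /ccoef /=.
  have : (k = m.+1) \/ (k = m.+2) \/ (m.+3 <= k)%N by lia.
  case=> [->|[->|hk]].
  + have f1 : (m.+2 == m.+3) = false by lia.
    rewrite eqxx f1 eqxx /=; move: (acoef al m.+2) (acoef al m.+3) (bcoef al m.+1) (bcoef al m.+2) (bcoef al m.+3) (bcoef al m.+4) => *; lra.
  + have f1 : (m.+3 == m.+4) = false by lia.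
    have f2 : (m.+2 == m.+4) = false by lia.
    have f3 : (m.+2 == m.+3) = false by lia.
    have f4 : (m.+2 < m.+4)%N = true by lia.
    rewrite f1 eqxx f2 f3 f4 /=; move: (acoef al m.+2) (acoef al m.+3) (bcoef al m.+1) (bcoef al m.+2) (bcoef al m.+3) (bcoef al m.+4) => *; lra.
  + have f1 : (m.+3 == k.+2) = false by lia.
    have f2 : (m.+3 == k.+1) = false by lia.
    have f3 : (m.+3 < k.+2)%N = true by lia.
    have f4 : (m.+2 == k.+2) = false by lia.
    have f5 : (m.+2 == k.+1) = false by lia.
    have f6 : (m.+2 < k.+2)%N = true by lia.
    rewrite f1 f2 f3 f4 f5 f6; move: (acoef al m.+2) (acoef al m.+3) (bcoef al m.+1) (bcoef al m.+2) (bcoef al m.+3) (bcoef al m.+4) => *; lra.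
- have hA0 : acoef al 0 = Af 0 by rewrite acoefE.
  have hB0 : bcoef al 0 = Bf 0 by rewrite bcoefE.
  have hA1 : acoef al 1 = Af 1 by rewrite acoefE.
  have hA2 : acoef al 2 = Af 2 by rewrite acoefE.
  have hB2 : bcoef al 2 = Bf 2 by rewrite bcoefE.
  have hB3 : bcoef al 3 = Bf 3 by rewrite bcoefE.
  apply: (@claim5_real _ _ _ c0).
  rewrite c0 Af0.
  clear e1 e2 e3 cjj c0.
  rewrite hB2 in b2; rewrite hB3 in b3.
  case: k => [|[|k]]; rewrite /ccoef /= hA1 hA2 hB0 hB2 ?hB3;
    move: b1 b2 b3; move: (Bf 0) (Af 1) (Af 2) (Bf 2) (Bf 3) (bcoef al 1) => *; lra.
Qed.

End S.

Local Close Scope classical_set_scope.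

Theorem lemma3 (R : realType) (alpha : R) (j : nat) :
  0 < alpha -> alpha < 1 -> (2 <= j)%N ->
  [/\ (11 / 16) * ((1 - alpha) / powR (j.+1%:R) alpha) < ccoef alpha j j,
      ccoef alpha j j < (1 - alpha) / powR (j%:R) alpha,
      ccoef alpha j 0 > ccoef alpha j 2,
      (forall s : nat, (2 <= s)%N -> (s <= j.-1)%N ->
         ccoef alpha j s > ccoef alpha j s.+1)
    & ccoef alpha j 0 + 3 * ccoef alpha j 1 - 4 * ccoef alpha j 2 > 0].
Proof.
move=> h0 h1 hj; exact: (@main R alpha h0 h1 j hj).
Qed.
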